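(* Let $A_1, C_2\in\mathbb{R}^{n\times m}$ and fix a position $(r,c)$ with $r\in\{1,\dots,n\}$, $c\in\{1,\dots,m\}$. For $j\neq c$ let $d_{rj}=C_2(r,\max(j,c))-C_2(r,\min(j,c))$ denote the pairwise difference in row $r$ of $C_2$ between columns $j$ and $c$. If $d_{rj}<0$ for all $j<c$ and $d_{rj}>0$ for all $j>c$, then the optimization problem $$\min_{E,\phi\in\mathbb{R}^{n\times m}:\ \phi(r,c)=0}\ \|E\|_F^2$$ subject to, for all rows $\gamma,\bar\gamma$ and columns $\sigma,\bar\sigma$: $A_1(\gamma,\sigma)+E(\gamma,\sigma)-A_1(\bar\gamma,\sigma)-E(\bar\gamma,\sigma)=\phi(\gamma,\sigma)-\phi(\bar\gamma,\sigma)$, $C_2(\gamma,\sigma)-C_2(\gamma,\bar\sigma)=\phi(\gamma,\sigma)-\phi(\gamma,\bar\sigma)$, $\phi(\gamma,\sigma)>0$ for all $(\gamma,\sigma)\ne(r,c)$, produces a finite matrix $E$, i.e. there exist real matrices $E,\phi$ satisfying all the constraints, so that $\phi$ is an exact potential for the bimatrix game $(A_1+E,\,C_2)$ with unique global minimum at $(r,c)$.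
   Context: Matrices are indexed by rows (player 1's actions) and columns (player 2's actions); both players are minimizers. $\|\cdot\|_F$ is the Frobenius norm. A matrix $\phi$ is an exact potential for the bimatrix game $(X,Y)$ if $X(\gamma,\sigma)-X(\bar\gamma,\sigma)=\phi(\gamma,\sigma)-\phi(\bar\gamma,\sigma)$ and $Y(\gamma,\sigma)-Y(\gamma,\bar\sigma)=\phi(\gamma,\sigma)-\phi(\gamma,\bar\sigma)$ for all $\gamma,\bar\gamma,\sigma,\bar\sigma$. *)

(* Defs.v *)
From HB Require Import structures.
From mathcomp Require Import all_boot all_order all_algebra.
From mathcomp Require Import reals.
Set Implicit Arguments. Unset Strict Implicit. Unset Printing Implicit Defensive.
Import Order.TTheory GRing.Theory Num.Theory.
Local Open Scope ring_scope.

Definition pairdiff (R : realType) (n m : nat) (C2 : 'M[R]_(n, m))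
    (r : 'I_n) (c j : 'I_m) : R :=
  if (j < c)%N then C2 r c - C2 r j else C2 r j - C2 r c.

Definition exact_potential (R : realType) (n m : nat)
    (X Y phi : 'M[R]_(n, m)) : Prop :=
  (forall (g g' : 'I_n) (s : 'I_m), X g s - X g' s = phi g s - phi g' s) /\
  (forall (g : 'I_n) (s s' : 'I_m), Y g s - Y g s' = phi g s - phi g s').

(* Main.v *)
Require Import Defs.
From HB Require Import structures.
From mathcomp Require Import all_boot all_order all_algebra.
From mathcomp Require Import reals.
From mathcomp Require Import ring lra.
Import Order.TTheory GRing.Theory Num.Theory.
Local Open Scope ring_scope.

Theorem theorem2 (R : realType) (n m : nat) (A1 C2 : 'M[R]_(n, m))
    (r : 'I_n) (c : 'I_m) :
  (forall j : 'I_m, (j < c)%N -> pairdiff C2 r c j < 0) ->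
  (forall j : 'I_m, (c < j)%N -> pairdiff C2 r c j > 0) ->
  exists E phi : 'M[R]_(n, m),
    phi r c = 0 /\
    (forall (g g' : 'I_n) (s : 'I_m),
        A1 g s + E g s - A1 g' s - E g' s = phi g s - phi g' s) /\
    (forall (g : 'I_n) (s s' : 'I_m),
        C2 g s - C2 g s' = phi g s - phi g s') /\
    (forall (g : 'I_n) (s : 'I_m), (g, s) != (r, c) -> 0 < phi g s) /\
    exact_potential (A1 + E) C2 phi.
Proof.
move=> Hl Hg.
pose h g := if g == r then - C2 r c else 1 + \sum_k `|C2 g k|.
pose phi := \matrix_(g, s) (C2 g s + h g).
have phiE g s : phi g s = C2 g s + h g by rewrite mxE.
exists (phi - A1), phi.
split; first by rewrite phiE /h eqxx subrr.
have E1 : forall (g g' : 'I_n) (s : 'I_m),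
    (A1 + (phi - A1)) g s - (A1 + (phi - A1)) g' s = phi g s - phi g' s.
  by move=> g g' s; rewrite !mxE; ring.
have E2 : forall (g : 'I_n) (s s' : 'I_m),
    C2 g s - C2 g s' = phi g s - phi g s'.
  by move=> g s s'; rewrite !phiE; ring.
split.
  move=> g g' s; have := E1 g g' s; rewrite !mxE => <-; rewrite addrA; lra.
split; first exact: E2.
split; last by split.
move=> g s; rewrite phiE /h; case: (g =P r) => [->|ng] /=.
  rewrite xpair_eqE eqxx /= => nsc.
  have [sc|cs|/val_inj e] := ltngtP s c.
  - by have := Hl _ sc; rewrite /pairdiff sc; lra.
  - by have := Hg _ cs; rewrite /pairdiff ltnNge (ltnW cs) /=; lra.
  - by rewrite e eqxx in nsc.
move=> _.
have : `|C2 g s| <= \sum_k `|C2 g k|.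
  rewrite (bigD1 s) //= lerDl; apply: sumr_ge0 => k _; exact: normr_ge0.
have := ler_norm (- C2 g s); rewrite normrN; lra.
Qed.
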